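(* Let $\mathcal{A}$ be a deterministic adaptive algorithm that is $(\alpha,\beta)$-instance optimal on graphs with $n$ vertices for parameter $k$. Then $\alpha^2\beta=\Omega(n/k)$.
   Context: Graphs are undirected with known edge weights and unique shortest paths; edges have distinct capacities unknown to the algorithm. For vertices $s,t$, $P(s,t)$ is the unique shortest path; an edge on $P(s,t)$ is a bottleneck edge of $P(s,t)$ if its capacity is strictly smaller than that of every other edge of $P(s,t)$. Selecting $s$ as a vantage point reveals the bottleneck edge of $P(s,t)$ and its capacity for every $t\neq s$; a set of vantage points reveals the union. An adaptive algorithm selects vantage points one at a time, learning the edges revealed by each selection before choosing the next. For an instance $I=(G,c)$, $OPT(I)$ is the maximum number of edges revealed by any set of $k$ vertices. An algorithm is $(\alpha,\beta)$-instance optimal ($\alpha,\beta\ge1$) if on every instance $I$ it selects at most $\alpha k$ vantage points and reveals at least $OPT(I)/\beta$ edges. *)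

(* Defs.v *)
From HB Require Import structures.
From mathcomp Require Import all_boot all_order all_algebra.
From mathcomp Require Import boolp reals.
Set Implicit Arguments. Unset Strict Implicit. Unset Printing Implicit Defensive.
Import Order.TTheory GRing.Theory Num.Theory.
Local Open Scope ring_scope.

Section Vantage.
Variables (R : realType) (n : nat).

(* Vertices are 'I_n; an (undirected) edge is a 2-element vertex set. *)
Definition vertex := 'I_n.
Definition edge := {set 'I_n}.
Definition graph := {set edge}.

Definition adj (G : graph) (u v : 'I_n) : bool := [set u; v] \in G.

Definition walk (G : graph) (s t : 'I_n) (p : seq 'I_n) : bool :=
  path (adj G) s p && (last s p == t).

Definition pedges (s : 'I_n) (p : seq 'I_n) : seq edge :=
  [seq [set x.1; x.2] | x <- zip (s :: p) p].

Definition pweight (w : edge -> R) (s : 'I_n) (p : seq 'I_n) : R :=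
  \sum_(e <- pedges s p) w e.

Definition shortest (G : graph) (w : edge -> R) (s t : 'I_n) (p : seq 'I_n) : Prop :=
  walk G s t p /\ forall q, walk G s t q -> pweight w s p <= pweight w s q.

Definition unique_shortest_paths (G : graph) (w : edge -> R) : Prop :=
  forall s t p q, shortest G w s t p -> shortest G w s t q -> p = q.

Definition bottleneck (cap : edge -> R) (s : 'I_n) (p : seq 'I_n) (e : edge) : Prop :=
  e \in pedges s p /\ forall e', e' \in pedges s p -> e' != e -> cap e < cap e'.

Definition reveals (G : graph) (w cap : edge -> R) (S : {set 'I_n}) (e : edge) : Prop :=
  exists s t p, [/\ s \in S, t != s, shortest G w s t p & bottleneck cap s p e].

Definition revealed (G : graph) (w cap : edge -> R) (S : {set 'I_n}) : {set edge} :=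
  [set e | `[< reveals G w cap S e >] ].

Definition valid_instance (G : graph) (w cap : edge -> R) : Prop :=
  [/\ forall e, e \in G -> #|e| = 2,
      forall e, e \in G -> 0 < w e,
      unique_shortest_paths G w,
      forall e, e \in G -> 0 < cap e
    & {in G &, injective cap}].

Definition OPT (G : graph) (w cap : edge -> R) (k : nat) : nat :=
  \max_(S : {set 'I_n} | (#|S| <= k)%N) #|revealed G w cap S|.

(* what the algorithm learns when selecting s: the revealed edges and their capacities *)
Definition observation := edge -> option R.
Definition observe (G : graph) (w cap : edge -> R) (s : 'I_n) : observation :=
  fun e => if e \in revealed G w cap [set s] then Some (cap e) else None.

Definition history := seq ('I_n * observation).

(* a deterministic adaptive algorithm: knows G and w; given the history of
   selections and observations, selects the next vantage point or stops (None) *)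
Definition algorithm := graph -> (edge -> R) -> history -> option 'I_n.

(* run with at most [fuel] selections; Some h iff the algorithm stops with history h *)
Fixpoint run (nxt : history -> option 'I_n) (obs : 'I_n -> observation)
    (fuel : nat) (h : history) : option history :=
  match nxt h with
  | None => Some h
  | Some v => match fuel with
              | 0 => None
              | fuel'.+1 => run nxt obs fuel' (rcons h (v, obs v))
              end
  end.

Definition selected (h : history) : {set 'I_n} := [set v in [seq x.1 | x <- h]].

Definition instance_optimal (k : nat) (alpha beta : R) (A : algorithm) : Prop :=
  forall (G : graph) (w cap : edge -> R), valid_instance G w cap ->
    exists (m : nat) (h : history),
      [/\ m%:R <= alpha * k%:R,
          run (A G w) (observe G w cap) m [::] = Some h
        & (OPT G w cap k)%:R <= beta * (#|revealed G w cap (selected h)|)%:R].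

End Vantage.

(* Main.v *)
Require Import Defs.
From HB Require Import structures.
From mathcomp Require Import all_boot all_order all_algebra.
From mathcomp Require Import boolp reals.
From mathcomp Require Import zify ring lra.
Set Implicit Arguments. Unset Strict Implicit. Unset Printing Implicit Defensive.
Import Order.TTheory GRing.Theory Num.Theory.
Local Open Scope ring_scope.

Section Generic.
Variables (R : realType) (n : nat).

Lemma pedges_cons (s x : 'I_n) p : pedges s (x :: p) = [set s; x] :: pedges x p.
Proof. by []. Qed.

Lemma pedges_G (G : graph n) s p e : path (adj G) s p -> e \in pedges s p -> e \in G.
Proof.
elim: p s => [|x p IH] s //= /andP[sx px].
rewrite (pedges_cons s x p) in_cons => /orP[/eqP->//|]; exact: IH.
Qed.

Lemma reveal1_first (G : graph n) (w c : edge n -> R) v e :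
  reveals G w c [set v] e ->
  [/\ e \in G & exists2 f, f \in G & v \in f /\ c e <= c f].
Proof.
case=> s [t [p [sS ts [[/andP[pth /eqP lt] _] [ep bn]]]]].
move: sS; rewrite inE => /eqP sv; subst s.
split; first exact: pedges_G pth ep.
case: p pth lt ep bn => [|x p] /=; first by move=> _ lt; rewrite lt eqxx in ts.
move=> /andP[vx px] _ ep bn.
exists [set v; x] => //; split; first by rewrite !inE eqxx.
case: (eqVneq [set v; x] e) => [->//|ne].
apply/ltW/bn; first by rewrite (pedges_cons v x p) mem_head.
exact: ne.
Qed.

Lemma reveal_transfer (G : graph n) (w c1 c2 : edge n -> R) v e M :
  (forall e, e \in G -> c1 e = c2 e \/ (M < c1 e /\ M < c2 e)) ->
  (forall f, f \in G -> v \in f -> c1 f <= M) ->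
  reveals G w c1 [set v] e -> reveals G w c2 [set v] e /\ c1 e = c2 e.
Proof.
move=> H1 H2 r.
have [eG [f fG [vf cef]]] := reveal1_first r.
have c1e : c1 e <= M by apply: le_trans cef (H2 f fG vf).
have ceq : c1 e = c2 e.
  by case: (H1 e eG) => // -[] h _; move: (lt_le_trans h c1e); rewrite ltxx.
split=> //.
move: r => [s [t [p [sS ts sh [ep bn]]]]].
exists s, t, p; split=> //; split=> // e' e'p ne.
have e'G : e' \in G.
  by case: sh => /andP[pth _] _; apply: pedges_G pth e'p.
case: (H1 e' e'G) => [<-|[_ h]]; first by rewrite -ceq; apply: bn.
by rewrite -ceq; apply: le_lt_trans h.
Qed.

Lemma obs_eq (G : graph n) (w c1 c2 : edge n -> R) v M :
  (forall e, e \in G -> c1 e = c2 e \/ (M < c1 e /\ M < c2 e)) ->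
  (forall f, f \in G -> v \in f -> c1 f <= M) ->
  observe G w c1 v = observe G w c2 v.
Proof.
move=> H1 H2.
have H1' : forall e, e \in G -> c2 e = c1 e \/ (M < c2 e /\ M < c1 e).
  by move=> e eG; case: (H1 e eG) => [->|[a b]]; [left|right].
have H2' : forall f, f \in G -> v \in f -> c2 f <= M.
  move=> f fG vf; have := H2 f fG vf.
  by case: (H1 f fG) => [<-//|[h _] h']; move: (lt_le_trans h h'); rewrite ltxx.
apply: funext => e; rewrite /observe /revealed !inE.
case: (asboolP (reveals G w c1 [set v] e)) => r1.
  have [r2 ->] := reveal_transfer H1 H2 r1.
  by case: asboolP.
case: asboolP => // r2.
by have [] := reveal_transfer H1' H2' r2.
Qed.

End Generic.


Section PathG.
Variable n' : nat.
Local Notation n := n'.+1.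

Definition pe (a : nat) : {set 'I_n} := [set inord a; inord a.+1].
Definition PG : graph n := [set pe a | a : 'I_n'].

Lemma inordK' (a : nat) : (a < n)%N -> nat_of_ord (inord a : 'I_n) = a.
Proof. exact: inordK. Qed.

Lemma mem_pe (a : nat) (u : 'I_n) : (a < n')%N -> (u \in pe a) = ((nat_of_ord u == a) || (nat_of_ord u == a.+1)).
Proof.
move=> an; rewrite !inE; congr orb; apply/eqP/eqP => [->|<-]; rewrite ?inordK' ?inord_val //; lia.
Qed.

Lemma pe_inj (a b : nat) : (a < n')%N -> (b < n')%N -> pe a = pe b -> a = b.
Proof.
move=> an bn e.
have h1 : (inord a : 'I_n) \in pe b by rewrite -e !inE eqxx.
have h2 : (inord a.+1 : 'I_n) \in pe b by rewrite -e !inE eqxx orbT.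
move: h1 h2; rewrite !mem_pe // !inordK'; lia.
Qed.

Lemma adjP (u v : 'I_n) : adj PG u v -> (nat_of_ord v = (nat_of_ord u).+1 \/ nat_of_ord u = (nat_of_ord v).+1).
Proof.
rewrite /adj /PG => /imsetP[a _ e].
have ha := ltn_ord a.
have h1 : u \in pe a by rewrite -e !inE eqxx.
have h2 : v \in pe a by rewrite -e !inE eqxx orbT.
have h3 : (inord a : 'I_n) \in [set u; v] by rewrite e !inE eqxx.
have h4 : (inord a.+1 : 'I_n) \in [set u; v] by rewrite e !inE eqxx orbT.
move: h1 h2 h3 h4; rewrite !mem_pe // !inE -!(inj_eq val_inj) /= !inordK'.
- by move=> /orP[]/eqP h1 /orP[]/eqP h2 /orP[]/eqP h3 /orP[]/eqP h4; lia.
all: lia.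
Qed.

Lemma adj_up (u v : 'I_n) : nat_of_ord v = (nat_of_ord u).+1 -> adj PG u v.
Proof.
move=> h; rewrite /adj /PG.
have un : (nat_of_ord u < n')%N by have := ltn_ord v; lia.
apply/imsetP; exists (Ordinal un) => //=.
rewrite /pe inord_val; congr [set _; _]; apply: ord_inj; rewrite /= inordK' /=; lia.
Qed.

Lemma adj_sym (u v : 'I_n) : adj PG u v = adj PG v u.
Proof. by rewrite /adj setUC. Qed.

Definition dist (a b : nat) : nat := (a - b) + (b - a).

Lemma dist_walk (s : 'I_n) p : path (adj PG) s p -> (dist (nat_of_ord s) (nat_of_ord (last s p)) <= size p)%N.
Proof.
elim: p s => [|x p IH] s /=; first by rewrite /dist; lia.
move=> /andP[sx px]; have := IH x px; have := adjP sx; rewrite /dist; lia.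
Qed.

Lemma walk_uniq (s : 'I_n) p q : path (adj PG) s p -> path (adj PG) s q ->
  last s p = last s q -> size p = size q -> size p = dist (nat_of_ord s) (nat_of_ord (last s p)) -> p = q.
Proof.
elim: p s q => [|x p IH] s [|y q] //= /andP[sx px] /andP[sy qy] el [sz] d.
have dx := dist_walk px; have dy := dist_walk qy.
have ax := adjP sx; have ay := adjP sy.
rewrite el in d dx.
have xy : x = y by apply: ord_inj; move: d dx dy ax ay; rewrite /dist; lia.
subst y; congr (_ :: _); apply: (IH x) => //.
by rewrite el; move: d dx ax; rewrite /dist; lia.
Qed.

Fixpoint up (s d : nat) : seq 'I_n :=
  if d is d'.+1 then inord s.+1 :: up s.+1 d' else [::].
Fixpoint down (s d : nat) : seq 'I_n :=
  if d is d'.+1 then inord s.-1 :: down s.-1 d' else [::].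

Lemma size_up s d : size (up s d) = d.
Proof. by elim: d s => //= d IH s; rewrite IH. Qed.
Lemma size_down s d : size (down s d) = d.
Proof. by elim: d s => //= d IH s; rewrite IH. Qed.

Lemma last_up s d : last (inord s) (up s d) = inord (s + d).
Proof. by elim: d s => [|d IH] s /=; rewrite ?addn0 // IH addSnnS. Qed.
Lemma last_down s d : last (inord s) (down s d) = inord (s - d).
Proof. by elim: d s => [|d IH] s /=; rewrite ?subn0 // IH; congr inord; lia. Qed.

Lemma path_up s d : (s + d < n)%N -> path (adj PG) (inord s) (up s d).
Proof.
elim: d s => [|d IH] s //= h; apply/andP; split; last by apply: IH; lia.
by apply: adj_up; rewrite !inordK'; lia.
Qed.

Lemma path_down s d : (d <= s < n)%N -> path (adj PG) (inord s) (down s d).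
Proof.
elim: d s => [|d IH] s //= h; apply/andP; split; last by apply: IH; lia.
by rewrite adj_sym; apply: adj_up; rewrite !inordK'; lia.
Qed.

Lemma pedges_up s d : pedges (inord s) (up s d) = map pe (iota s d).
Proof. by elim: d s => [|d IH] s //=; rewrite (pedges_cons _ (inord s.+1)) IH. Qed.

Lemma straight (s t : 'I_n) : exists p, walk PG s t p && (size p == dist (nat_of_ord s) (nat_of_ord t)).
Proof.
have e : (inord (nat_of_ord s) : 'I_n) = s := inord_val s.
have hs := ltn_ord s; have ht := ltn_ord t.
case: (leqP (nat_of_ord s) (nat_of_ord t)) => h.
  exists (up s (t - s)); rewrite /walk size_up.
  have P : path (adj PG) (inord (nat_of_ord s)) (up s (t - s)) by apply: path_up; lia.
  have Lst := last_up s (t - s); rewrite e in P Lst.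
  rewrite P Lst /=; apply/andP; split; last by rewrite /dist; apply/eqP; lia.
  by apply/eqP/ord_inj; rewrite !inordK' /=; lia.
exists (down s (s - t)); rewrite /walk size_down.
have P : path (adj PG) (inord (nat_of_ord s)) (down s (s - t)) by apply: path_down; lia.
have Lst := last_down s (s - t); rewrite e in P Lst.
rewrite P Lst /=; apply/andP; split; last by rewrite /dist; apply/eqP; lia.
by apply/eqP/ord_inj; rewrite !inordK' /=; lia.
Qed.

End PathG.


Section Caps.
Variables (R : realType) (n' : nat).
Local Notation n := n'.+1.
Local Notation pe := (pe n').
Local Notation PG := (PG n').

Definition tmL (L : seq 'I_n) (a : nat) : nat := minn (index (inord a) L) (index (inord a.+1) L).
Definition capf (L : seq 'I_n) (a : nat) : nat :=
  if (tmL L a < size L)%N then (tmL L a * n + a + 1)%N else ((size L + 2) * n - a)%N.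
Definition capL (L : seq 'I_n) (e : edge n) : R :=
  if [pick a : 'I_n' | pe a == e] is Some a then (capf L a)%:R else 1.
Definition w1 : edge n -> R := fun _ => 1.

Lemma capE L (a : 'I_n') : capL L (pe a) = (capf L a)%:R.
Proof.
rewrite /capL; case: pickP => [b /eqP h|/(_ a)]; last by rewrite eqxx.
by have -> : b = a by apply: ord_inj; apply: pe_inj h.
Qed.

Lemma small_lt (t s a : nat) : (t < s)%N -> (a < n')%N -> (t * n + a + 1 < s * n)%N.
Proof. move=> ts an; have : (t.+1 * n <= s * n)%N by rewrite leq_mul2r ts orbT. rewrite mulSn; lia. Qed.

Lemma big_gt (s a : nat) : (a < n')%N -> (s * n < (s + 2) * n - a)%N.
Proof. move=> an; rewrite mulnDl; lia. Qed.

Lemma capf_gt0 L a : (a < n')%N -> (0 < capf L a)%N.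
Proof. move=> an; rewrite /capf; case: ifP => _; first lia. have := big_gt (size L) an; lia. Qed.

Lemma capf_inj L a b : (a < n')%N -> (b < n')%N -> capf L a = capf L b -> a = b.
Proof.
move=> an bn; rewrite /capf.
case: ifP => ha; case: ifP => hb.
- move=> e; have := congr1 (modn^~ n) e; rewrite /= -!addnA !modnMDl !modn_small; lia.
- have := small_lt ha an; have := big_gt (size L) bn; lia.
- have := small_lt hb bn; have := big_gt (size L) an; lia.
- rewrite mulnDl; lia.
Qed.

Lemma pweight1 (s : 'I_n) p : pweight w1 s p = (size p)%:R.
Proof.
elim: p s => [|x p IH] s; first by rewrite /pweight big_nil.
by rewrite /pweight pedges_cons big_cons -/(pweight w1 x p) IH /w1 /= -natr1 addrC.
Qed.

Lemma shortestP (s t : 'I_n) p : shortest PG w1 s t p <-> (walk PG s t p /\ forall q, walk PG s t q -> (size p <= size q)%N).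
Proof.
rewrite /shortest; split=> -[wp h]; split=> // q wq; have := h q wq;
  by rewrite !pweight1 ler_nat.
Qed.

Lemma shortest_size (s t : 'I_n) p : shortest PG w1 s t p -> size p = dist s t.
Proof.
move=> /shortestP [wp h]; have [r /andP[wr /eqP sr]] := straight s t.
have := h r wr; move: wp => /andP[pth /eqP lt]; have := dist_walk pth; rewrite lt; lia.
Qed.

Lemma usp : unique_shortest_paths PG w1.
Proof.
move=> s t p q sp sq.
have ep := shortest_size sp; have eq := shortest_size sq.
case: sp => /andP[pp /eqP lp] _; case: sq => /andP[pq /eqP lq] _.
apply: (walk_uniq pp pq); rewrite ?lp ?lq //; lia.
Qed.

Lemma valid L : valid_instance PG w1 (capL L).
Proof.
split.
- move=> e /imsetP[a _ ->]; rewrite cards2; case: eqP => // /(congr1 (@nat_of_ord _)).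
  move: (ltn_ord a) => ha; rewrite !inordK'; lia.
- by move=> e _; rewrite /w1 ltr01.
- exact: usp.
- by move=> e /imsetP[a _ ->]; rewrite capE ltr0n capf_gt0.
- move=> e1 e2 /imsetP[a _ ->] /imsetP[b _ ->]; rewrite !capE => /eqP; rewrite eqr_nat => /eqP h.
  by congr pe; apply: capf_inj h.
Qed.

End Caps.


Section Adv.
Variables (R : realType) (n' : nat).
Local Notation n := n'.+1.
Local Notation pe := (pe n').
Local Notation PG := (PG n').
Local Notation capL := (@capL R n').
Local Notation w1 := (@w1 R n').

Lemma capE' (L : seq 'I_n) (a : nat) (h : (a < n')%N) : capL L (pe a) = (capf L a)%:R.
Proof. exact: (capE R L (Ordinal h)). Qed.

Lemma index_ext (x : 'I_n) L s :
  index x (L ++ s) = index x L \/ ((size L <= index x L)%N /\ (size L <= index x (L ++ s))%N).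
Proof.
rewrite index_cat; case: ifP => h; [by left|right].
by rewrite memNindex ?h //; split=> //; apply: leq_addr.
Qed.

Lemma tm_ext (L s : seq 'I_n) a : (tmL L a < size L)%N -> tmL (L ++ s) a = tmL L a.
Proof.
rewrite /tmL; have := index_ext (inord a) L s; have := index_ext (inord a.+1) L s.
have := index_size (inord a : 'I_n) L; have := index_size (inord a.+1 : 'I_n) L.
set i1 := index (inord a) L; set i2 := index (inord a.+1) L.
set j1 := index (inord a) (L ++ s); set j2 := index (inord a.+1) (L ++ s); set S := size L. lia.
Qed.

Lemma tm_ext_ge (L s : seq 'I_n) a : ~~ (tmL L a < size L)%N -> (size L <= tmL (L ++ s) a)%N.
Proof.
rewrite /tmL; have := index_ext (inord a) L s; have := index_ext (inord a.+1) L s.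
have := index_size (inord a : 'I_n) L; have := index_size (inord a.+1 : 'I_n) L.
set i1 := index (inord a) L; set i2 := index (inord a.+1) L.
set j1 := index (inord a) (L ++ s); set j2 := index (inord a.+1) (L ++ s); set S := size L. lia.
Qed.

Lemma inc_small (L : seq 'I_n) (v : 'I_n) f : v \in L -> f \in PG -> v \in f -> capL L f < (size L * n)%:R.
Proof.
move=> vL /imsetP[a _ ->]; have an := ltn_ord a.
rewrite mem_pe // => hv; rewrite capE ltr_nat /capf.
have hi : (tmL L a <= index v L)%N.
  rewrite /tmL; move/orP: hv => [] /eqP hv.
    have -> : (inord a : 'I_n) = v by apply: ord_inj; rewrite inordK'; lia.
    exact: geq_minl.
  have -> : (inord a.+1 : 'I_n) = v by apply: ord_inj; rewrite inordK'; lia.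
  exact: geq_minr.
have hl : (tmL L a < size L)%N by apply: leq_ltn_trans hi _; rewrite index_mem.
by rewrite hl; apply: small_lt.
Qed.

Lemma obs_ext (L s : seq 'I_n) v : v \in L -> observe PG w1 (capL (L ++ s)) v = observe PG w1 (capL L) v.
Proof.
move=> vL; symmetry; apply: (@obs_eq R n _ _ _ _ _ (size L * n)%:R).
  move=> e /imsetP[a _ ->]; have an := ltn_ord a; rewrite !capE /capf.
  case: ifP => h.
    left; rewrite tm_ext // ifT // size_cat; lia.
  right; split; first by rewrite ltr_nat; apply: big_gt.
  have := tm_ext_ge s (negbT h); case: ifP => h' hge; rewrite ltr_nat.
    have : (size L * n <= tmL (L ++ s) a * n)%N by rewrite leq_mul2r hge orbT. lia.
  have := big_gt (size (L ++ s)) an; rewrite size_cat mulnDl; lia.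
by move=> f fG vf; apply/ltW/(inc_small vL fG vf).
Qed.

Variable A : algorithm R n.
Local Notation nxt := (A PG w1).

Fixpoint advH (i : nat) : history R n :=
  if i is i'.+1 then
    let h := advH i' in
    if nxt h is Some v then rcons h (v, observe PG w1 (capL (rcons (map fst h) v)) v) else h
  else [::].

Lemma advH_prefix i j : (i <= j)%N -> exists s, advH j = advH i ++ s.
Proof.
elim: j => [|j IH]; first by rewrite leqn0 => /eqP->; exists [::]; rewrite cats0.
rewrite leq_eqVlt => /orP[/eqP->|]; first by exists [::]; rewrite cats0.
rewrite ltnS => /IH[s e] /=; rewrite e.
case: (nxt (advH i ++ s)) => [v|]; last by exists s.
by exists (rcons s (v, observe PG w1 (capL (rcons (map fst (advH i ++ s)) v)) v)); rewrite rcons_cat.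
Qed.

Lemma advH_size i : (size (advH i) <= i)%N.
Proof. elim: i => //= i IH; case: (nxt (advH i)) => [v|]; rewrite ?size_rcons; lia. Qed.

Lemma advH_stop i j : nxt (advH i) = None -> (i <= j)%N -> advH j = advH i.
Proof.
move=> h; elim: j => [|j IH]; first by rewrite leqn0 => /eqP->.
rewrite leq_eqVlt => /orP[/eqP->//|]; rewrite ltnS => /IH /= e.
by rewrite e h.
Qed.

Lemma run_adv T F j h : (j + F <= T)%N ->
  run nxt (observe PG w1 (capL (map fst (advH T)))) F (advH j) = Some h ->
  exists2 j', (j' <= j + F)%N & h = advH j' /\ nxt h = None.
Proof.
elim: F j => [|F IH] j hle /=.
  by case E: (nxt (advH j)) => [v|] // [<-]; exists j; rewrite ?addn0.
case E: (nxt (advH j)) => [v|]; last by move=> [<-]; exists j => //; apply: leq_addr.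
have e1 : advH j.+1 = rcons (advH j) (v, observe PG w1 (capL (rcons (map fst (advH j)) v)) v).
  by rewrite /= E.
have hj : (j.+1 <= T)%N by lia.
have [s es] := advH_prefix hj.
have eo : observe PG w1 (capL (map fst (advH T))) v
        = observe PG w1 (capL (rcons (map fst (advH j)) v)) v.
  rewrite es map_cat e1 map_rcons /=; apply: obs_ext.
  by rewrite mem_rcons mem_head.
rewrite eo -e1 => /IH [|j' h1 h2]; first by lia.
by exists j' => //; lia.
Qed.

End Adv.


Section Bounds.
Variables (R : realType) (n' : nat).
Local Notation n := n'.+1.
Local Notation pe := (pe n').
Local Notation PG := (PG n').
Local Notation capL := (@capL R n').
Local Notation w1 := (@w1 R n').

Lemma reveals_single (c : edge n -> R) S e :
  reveals PG w1 c S e -> exists2 s, s \in S & reveals PG w1 c [set s] e.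
Proof.
move=> [s [t [p [sS ts sh bn]]]]; exists s => //; exists s, t, p; split=> //.
by rewrite inE.
Qed.

Definition nb (p : 'I_n * bool) : edge n := if p.2 then pe p.1 else pe (p.1).-1.

Lemma alg_bound (L : seq 'I_n) : (#|revealed PG w1 (capL L) [set v in L]| <= 2 * size L)%N.
Proof.
have sub : revealed PG w1 (capL L) [set v in L] \subset nb @: setX [set v in L] [set: bool].
  apply/subsetP => e; rewrite inE => /asboolP /reveals_single [s sL r].
  have [eG [f fG [sf cef]]] := reveal1_first r.
  have sL' : s \in L by rewrite inE in sL.
  have hf := inc_small R sL' fG sf.
  move: eG cef => /imsetP[a _ ->] cef; have an := ltn_ord a.
  have := le_lt_trans cef hf; rewrite capE ltr_nat /capf.
  case: ifP => ht; last by have := big_gt (size L) an; lia.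
  move=> _; move: ht; rewrite /tmL.
  case: (boolP ((inord a : 'I_n) \in L)) => ha.
    move=> _; apply/imsetP; exists (inord a, true); first by rewrite !inE ha.
    by rewrite /nb /= inordK' //; lia.
  rewrite (memNindex ha) => hb.
  have hb' : (inord a.+1 : 'I_n) \in L.
    by rewrite -index_mem; move: hb; set S := size L; set i := index _ L; lia.
  apply/imsetP; exists (inord a.+1, false); first by rewrite !inE hb'.
  by rewrite /nb /= inordK' //; lia.
apply: leq_trans (subset_leq_card sub) _.
apply: leq_trans (leq_imset_card _ _) _.
rewrite cardsX cardsT card_bool mulnC leq_mul2l /=.
by rewrite cardsE card_size.
Qed.


Lemma capf_free (L : seq 'I_n) a : (inord a : 'I_n) \notin L -> (inord a.+1 : 'I_n) \notin L ->
  capf L a = ((size L + 2) * n - a)%N.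
Proof.
move=> h1 h2; rewrite /capf /tmL (memNindex h1) (memNindex h2) minnn ltnn //.
Qed.

Lemma window_free (L : seq 'I_n) (g : nat) (j : nat) :
  (0 < g)%N -> (forall x : 'I_n, x \in L -> (x %/ g)%N != j) ->
  forall r, (r < g)%N -> (j * g + r < n)%N -> (inord (j * g + r) : 'I_n) \notin L.
Proof.
move=> g0 h r rg jn; apply/negP => /h; rewrite inordK' // divnMDl // divn_small // addn0.
by rewrite eqxx.
Qed.

Lemma reveal_window (L : seq 'I_n) (S : {set 'I_n}) (x i : nat) :
  (inord x : 'I_n) \in S -> (x + i.+1 < n)%N ->
  (forall r, (r <= i.+1)%N -> (inord (x + r) : 'I_n) \notin L) ->
  pe (x + i) \in revealed PG w1 (capL L) S.
Proof.
move=> xS xn fr; rewrite inE; apply/asboolP.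
exists (inord x), (inord (x + i.+1)), (up n' x i.+1); split=> //.
- apply/eqP => /(congr1 (@nat_of_ord _)); rewrite !inordK'; lia.
- apply/shortestP; split.
    by rewrite /walk path_up // last_up eqxx.
  move=> q /andP[pq /eqP lq]; have := dist_walk pq; rewrite lq size_up /dist !inordK'; lia.
- rewrite /bottleneck pedges_up; split.
    by apply: map_f; rewrite mem_iota; lia.
  move=> e' /mapP[b]; rewrite mem_iota => hb -> ne.
  have bi : (b < x + i)%N by case: (ltngtP b (x + i)) => // h; [lia | by move: ne; rewrite h eqxx].
  rewrite !capE' ?ltr_nat; try lia.
  have f1 : (inord b : 'I_n) \notin L by have h := fr (b - x)%N; rewrite subnKC in h; [apply: h; lia | lia].
  have f2 : (inord b.+1 : 'I_n) \notin L by have h := fr (b.+1 - x)%N; rewrite subnKC in h; [apply: h; lia | lia].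
  have f3 : (inord (x + i) : 'I_n) \notin L by apply: fr; lia.
  have f4 : (inord (x + i).+1 : 'I_n) \notin L by rewrite -addnS; apply: fr; lia.
  rewrite !capf_free // mulnDl; lia.
Qed.


Lemma opt_bound (L : seq 'I_n) (m k W g : nat) : (size L <= m)%N -> (0 < k)%N ->
  W = (m + k)%N -> g = (n %/ W)%N -> (2 <= g)%N ->
  exists2 S : {set 'I_n}, (#|S| <= k)%N & (k * (g - 1) <= #|revealed PG w1 (capL L) S|)%N.
Proof.
move=> sL k0 EW Eg g2.
have W0 : (0 < W)%N by lia.
have Wg : (W * g <= n)%N by rewrite Eg mulnC leq_trunc_div.
pose j0 : 'I_W := Ordinal W0.
pose hits := [set j : 'I_W | [exists x : 'I_n, (x \in L) && ((x %/ g)%N == j)]].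
have hc : (#|hits| <= size L)%N.
  have sub : hits \subset [set insubd j0 (x %/ g)%N | x : 'I_n in [set v in L]].
    apply/subsetP => j; rewrite inE => /existsP[x /andP[xL /eqP xj]].
    apply/imsetP; exists x; first by rewrite inE.
    by apply: val_inj; rewrite val_insubd xj (ltn_ord j).
  apply: leq_trans (subset_leq_card sub) _; apply: leq_trans (leq_imset_card _ _) _.
  by rewrite cardsE card_size.
pose free := ~: hits.
have fc : (k <= #|free|)%N.
  have := cardsC hits; rewrite card_ord -/free => h; move: hc sL h.
  set a := #|hits|; set b := #|free|; lia.
pose s := take k (enum free).
have ssz : size s = k by rewrite size_takel // -cardE.
have su : uniq s by apply: take_uniq; apply: enum_uniq.
pose F := [set j in s].
have Fc : #|F| = k by rewrite cardsE (card_uniqP su) ssz.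
have Ff : forall j, j \in F -> j \in free by move=> j; rewrite inE => /mem_take; rewrite mem_enum.
pose S := [set (inord (j * g) : 'I_n) | j : 'I_W in F].
exists S; first by rewrite -Fc leq_imset_card.
pose E := [set pe (p.1 * g + p.2) | p : 'I_W * 'I_(g.-1) in setX F [set: 'I_(g.-1)]].
have bnd : forall (j : 'I_W) (r : nat), (r < g)%N -> (j * g + r < n)%N.
  move=> j r rg; have : ((j.+1) * g <= W * g)%N by rewrite leq_mul2r ltn_ord orbT.
  rewrite mulSn; lia.
have Ec : #|E| = (k * (g - 1))%N.
  rewrite card_in_imset; first by rewrite cardsX Fc cardsT card_ord; lia.
  move=> [j1 i1] [j2 i2] _ _ /= e.
  have h1 := ltn_ord i1; have h2 := ltn_ord i2.
  have b1 := bnd j1 i1.+1; have b2 := bnd j2 i2.+1.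
  have lt1 : (j1 * g + i1 < n')%N by lia.
  have lt2 : (j2 * g + i2 < n')%N by lia.
  have e' := pe_inj lt1 lt2 e.
  have ei : (i1 : nat) = i2.
    have := congr1 (modn^~ g) e'; rewrite /= !modnMDl !modn_small //; lia.
  have ej : (j1 : nat) = j2.
    have hg : (0 < g)%N by lia.
    apply/eqP; rewrite -(eqn_pmul2r hg); apply/eqP; lia.
  by congr pair; apply: ord_inj.
have sub : E \subset revealed PG w1 (capL L) S.
  apply/subsetP => e /imsetP[[j i] /setXP[jF _] ->] /=.
  have hi := ltn_ord i.
  apply: reveal_window.
  - by apply/imsetP; exists j.
  - by apply: bnd; lia.
  - move=> r rle; apply: window_free; [lia| |lia|apply: bnd; lia].
    move=> x xL; apply/eqP => xj; move: (Ff j jF); rewrite inE => /negP; apply.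
    by rewrite inE; apply/existsP; exists x; rewrite xL xj eqxx.
by rewrite -Ec; apply: subset_leq_card.
Qed.

End Bounds.


Theorem mainTheorem5 :
  exists c : rat, 0 < c /\
    forall (R : realType) (n k : nat) (alpha beta : R) (A : algorithm R n),
      (0 < k)%N -> 1 <= alpha -> 1 <= beta ->
      instance_optimal k alpha beta A ->
      ratr c * (n%:R / k%:R) <= alpha ^+ 2 * beta.
Proof.
exists (8%:R)^-1; split; first by rewrite invr_gt0 ltr0n.
move=> R n k alpha beta A k0 a1 b1 IO.
have a0 : 0 < alpha by apply: lt_le_trans a1; exact: ltr01.
have b0 : 0 < beta by apply: lt_le_trans b1; exact: ltr01.
have kR : 0 < (k%:R : R) by rewrite ltr0n.
rewrite fmorphV rmorph_nat ler_pdivrMl ?ltr0n // ler_pdivrMr //.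
case: n A IO => [|n'] A IO.
  by rewrite !mulr_ge0 // ltW.

pose T := Num.bound (alpha * k%:R).
have hT : alpha * k%:R < T%:R by apply: archi_boundP; rewrite mulr_ge0 // ltW.
pose L := map fst (advH A T).
have [m [h [hm hrun hopt]]] := IO (PG n') (w1 R (n':=n')) (capL R L) (valid R L).
have mT : (m <= T)%N by rewrite -(ler_nat R); apply/ltW/(le_lt_trans hm hT).
have [j' hj' [eh hn]] := @run_adv R n' A T m 0 h mT hrun.
have hTh : advH A T = h by rewrite eh; apply: advH_stop; [rewrite -eh | lia].
have sh : (size h <= m)%N by have := advH_size A j'; rewrite -eh; lia.
have alg : (#|revealed (PG n') (w1 R (n':=n')) (capL R L) (selected h)| <= 2 * m)%N.
  rewrite /L hTh /selected; have := alg_bound R (map fst h); rewrite size_map.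
  set x := #|_|; lia.
pose W := (m + k)%N; pose g := (n'.+1 %/ W)%N.
have hg : (g.+1)%:R <= 2 * alpha * beta + 2 :> R.
  case: (leqP g 1) => g1.
    apply: le_trans (_ : 2%:R <= _); first by rewrite ler_nat; lia.
    nra.
  have sL : (size L <= m)%N by rewrite /L hTh size_map.
  have [S Sk Sr] := @opt_bound R n' L m k W g sL k0 erefl erefl g1.
  have o1 : (k * (g - 1) <= OPT (PG n') (w1 R (n':=n')) (capL R L) k)%N.
    apply: leq_trans Sr _; rewrite /OPT.
    exact: (leq_bigmax_cond (F := fun S => #|revealed (PG n') (w1 R (n':=n')) (capL R L) S|) S Sk).
  have o2 : ((k * (g - 1))%:R : R) <= beta * (2 * m)%:R.
    apply: le_trans (_ : _ <= (OPT (PG n') (w1 R (n':=n')) (capL R L) k)%:R) _.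
      by rewrite ler_nat.
    by apply: le_trans hopt _; rewrite ler_pM2l // ler_nat.
  have o3 : ((k * (g - 1))%:R : R) <= 2 * alpha * beta * k%:R.
    apply: le_trans o2 _; rewrite natrM.
    have : (m%:R : R) <= alpha * k%:R := hm.
    move=> hm'; nra.
  have o4 : ((g - 1)%:R : R) <= 2 * alpha * beta.
    rewrite natrM in o3; rewrite -(ler_pM2r kR) mulrC; move: o3; nra.
  have -> : g.+1 = ((g - 1) + 2)%N by lia.
  by rewrite natrD lerD2r.
have hnW : (n'.+1 < g.+1 * W)%N by apply: ltn_ceil; lia.
have hW : (W%:R : R) <= alpha * k%:R + k%:R by rewrite /W natrD lerD2r.
have hn' : (n'.+1%:R : R) <= (2 * alpha * beta + 2) * (alpha * k%:R + k%:R).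
  apply: le_trans (_ : ((g.+1 * W)%N%:R : R) <= _).
    by rewrite ler_nat ltnW // hnW.
  rewrite natrM; apply: ler_pM => //.
have k1 : 1 <= (k%:R : R) by rewrite ler1n.
apply: le_trans hn' _.
have ab : 1 <= alpha * beta by rewrite -[1]mulr1 ler_pM // ler01.
have e1 : 2 * alpha * beta + 2 <= 4 * alpha * beta by nra.
have e2 : alpha * k%:R + k%:R <= 2 * alpha * k%:R by nra.
apply: le_trans (_ : (4 * alpha * beta) * (2 * alpha * k%:R) <= _).
  apply: ler_pM => //; last by rewrite ?addr_ge0 ?mulr_ge0 // ltW.
  by rewrite addr_ge0 // !mulr_ge0 // ltW.
rewrite expr2 le_eqVlt; apply/orP; left; apply/eqP; ring.
Qed.
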